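(* Let $c_k\in(0,1)$, $l_k>0$ decreasing to $0$, $I_k$ the open interval of length $l_k$ centered at $c_k$, and assume (A1) and (A3) below. Let $f\in C([0,1])$, let $\mu_k=\frac{1}{|I_k|}f(x)\,dx|_{I_k}$ (with $dx$ Lebesgue measure restricted to $[0,1]$), $\mu_{\mathcal{A}_n}=\frac{1}{\#\mathcal{A}_n}\sum_{k\in\mathcal{A}_n}\mu_k$ and $V_n=\bigcup_{k\in\mathcal{A}_n}I_k$. Then $\mu_{\mathcal{A}_n}(V_n)=\int_0^1 f(x)\phi(x)\,dx+o(1)$ as $n\to\infty$.
   Context: Notation: $\mathcal{A}_n=\{n,\dots,2n-1\}$, $\mathcal{A}_{n,q}=\mathcal{A}_n\cup\mathcal{A}_{2n}\cup\cdots\cup\mathcal{A}_{2^qn}$. (A1) There is $\phi\in L^1([0,1],dx)$, $\phi>0$ a.e., with $\frac{1}{\#\mathcal{A}_n}\sum_{k\in\mathcal{A}_n}g(c_k)\to\int_0^1 g\phi\,dx$ for every $g\in C([0,1])$; $\phi$ in the claim is this function. (A3) There are integers $q(n)\to\infty$ such that for every $\varepsilon>0$, for all large $n$ and all $i\ne j$ in $\mathcal{A}_{n,q(n)}$, $\frac{l_i+l_j}{2|c_i-c_j|}<\varepsilon$. *)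

(* Defs.v *)
From HB Require Import structures.
From mathcomp Require Import all_boot all_order all_algebra.
From mathcomp Require Import all_classical all_reals all_analysis.
Set Implicit Arguments. Unset Strict Implicit. Unset Printing Implicit Defensive.
Import Order.TTheory GRing.Theory Num.Theory.
Import numFieldNormedType.Exports.
Local Open Scope classical_set_scope.
Local Open Scope ring_scope.

Definition Ablock (n : nat) : set nat := [set k | (n <= k < n.*2)%N].

Definition Ablocks (n q : nat) : set nat :=
  [set k | exists2 m : nat, (m <= q)%N & Ablock (2 ^ m * n) k].

Definition Iint (R : realType) (c l : nat -> R) (k : nat) : set R :=
  `](c k - l k / 2), (c k + l k / 2)[.

Definition mu_k (R : realType) (c l : nat -> R) (f : R -> R) (k : nat)
  (A : set R) : R :=
  (l k)^-1 * \int[@lebesgue_measure R]_(x in A `&` Iint c l k `&` `[0, 1]) f x.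

Definition mu_A (R : realType) (c l : nat -> R) (f : R -> R) (n : nat)
  (A : set R) : R :=
  (n%:R)^-1 * \sum_(n <= k < n.*2) mu_k c l f k A.

Definition Vn (R : realType) (c l : nat -> R) (n : nat) : set R :=
  \bigcup_(k in Ablock n) Iint c l k.

(* Main.v *)
Require Import Defs.
From HB Require Import structures.
From mathcomp Require Import all_boot all_order all_algebra.
From mathcomp Require Import all_classical all_reals all_analysis.
From mathcomp Require Import measurable_realfun lra ring.
Import Order.TTheory GRing.Theory Num.Theory.
Import numFieldNormedType.Exports.
Local Open Scope classical_set_scope.
Local Open Scope ring_scope.
Lemma cont_within_eps (R : realType) (f : R -> R) (A : set R) (x : R) :
  {within A, continuous f} -> A x -> forall e : R, 0 < e ->
  exists2 r : R, 0 < r & forall y, A y -> `|x - y| < r -> `|f x - f y| < e.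
Proof.
move=> cf Ax e e0.
have := cf x; move/cvgrPdist_lt => /(_ e e0).
rewrite /nbhs /= -nbhs_subspace_in //.
rewrite /within /= => /nbhs_ballP [r r0 Hr].
exists r => // y Ay xy.
have := Hr y; rewrite /ball /= => /(_ xy Ay).
by rewrite /from_subspace /=.
Qed.

Lemma unif_cont01 (R : realType) (f : R -> R) :
  {within `[0, 1], continuous f} -> forall e : R, 0 < e ->
  exists2 eta : R, 0 < eta & forall x y, `[0, 1]%classic x -> `[0, 1]%classic y ->
    `|x - y| < eta -> `|f x - f y| < e.
Proof.
move=> cf e e0.
have cpt := @segment_compact R 0 1.
have NC := (near_covering_withinP _).2 ((compact_near_coveringP _).1 cpt).
have := NC nat \oo (fun m x => forall y, `[0, 1]%classic y -> `|x - y| < m.+1%:R^-1 -> `|f x - f y| < e) _.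
case.
- move=> x Kx.
  have e20 : 0 < e / 2 by rewrite divr_gt0.
  have [r r0 Hr] := @cont_within_eps R f _ x cf Kx _ e20.
  have r20 : 0 < r / 2 by rewrite divr_gt0.
  have [N _ HN] := near_infty_natSinv_lt (PosNum r20).
  exists (ball x (r / 2), [set m | (N <= m)%N]).
    split; first exact: nbhsx_ballx.
    by exists N.
  case=> x' m [/= xx' Nm] Kx' y Ky x'y.
  have hm := HN m Nm; rewrite /= in hm.
  rewrite /ball /= in xx'.
  have h1 : `|x - x'| < r.
    by apply: (lt_trans xx'); rewrite ltr_pdivrMr // ltr_pMr // ltr1n.
  have h2 : `|x - y| < r.
    rewrite (le_lt_trans (ler_distD x' x y)) //.
    rewrite [r](splitr r) ltrD //.
    exact: lt_trans x'y hm.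
  have := Hr _ Kx' h1; have := Hr _ Ky h2.
  move=> A1 A2; rewrite [e](splitr e).
  rewrite (le_lt_trans (ler_distD (f x) (f x') (f y))) //.
  by rewrite distrC ltrD.
- move=> N _ HN.
  exists N.+1%:R^-1 => // x y Kx Ky xy.
  exact: HN N (leqnn N) x Kx y Ky xy.
Qed.

Definition gb {R : realType} (d x : R) : R :=
  Num.max 0 (1 - x / (2 * d)) + Num.max 0 (1 - (1 - x) / (2 * d)).

Lemma gb_cont {R : realType} (d : R) : continuous (gb d).
Proof.
move=> x; rewrite /gb /continuous_at.
apply: cvgD.
- apply: (@continuous_max R R (cst 0) (fun x => 1 - x / (2 * d))).
  + exact: cvg_cst.
  + apply: cvgB; first exact: cvg_cst.
    apply: cvgMl; exact: cvg_id.
- apply: (@continuous_max R R (cst 0) (fun x => 1 - (1 - x) / (2 * d))).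
  + exact: cvg_cst.
  + apply: cvgB; first exact: cvg_cst.
    apply: cvgMl; apply: cvgB; [exact: cvg_cst| exact: cvg_id].
Qed.

Lemma gb_ge0 {R : realType} (d x : R) : 0 <= gb d x.
Proof. by rewrite /gb addr_ge0 // le_max lexx. Qed.

Lemma gb_le2 {R : realType} (d x : R) : 0 < d -> 0 <= x <= 1 -> gb d x <= 2.
Proof.
move=> d0 /andP[x0 x1]; rewrite /gb.
have d20 : 0 < 2 * d by rewrite mulr_gt0.
have -> : (2 : R) = 1 + 1 by [].
apply: lerD; rewrite ge_max ler01 /= gerBl.
- by rewrite divr_ge0 // ltW.
- by rewrite divr_ge0 ?subr_ge0 // ltW.
Qed.

Lemma gb_half {R : realType} (d x : R) : 0 < d -> x < d \/ 1 - d < x -> 2^-1 <= gb d x.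
Proof.
move=> d0 hx; rewrite /gb.
have d20 : 0 < 2 * d by rewrite mulr_gt0.
have key : forall y, y < d -> 2^-1 <= Num.max 0 (1 - y / (2 * d)).
  move=> y yd; rewrite le_max; apply/orP; right.
  rewrite lerBrDr -lerBrDl.
  have -> : (1 : R) - 2^-1 = 2^-1.
    by rewrite {1}[1](splitr (1 : R)) mul1r addrK.
  by rewrite ler_pdivrMr // mulrA mulVf // mul1r ltW.
case: hx => hx.
- by rewrite (le_trans (key _ hx)) // lerDl le_max lexx.
- have : 1 - x < d by rewrite ltrBlDr -ltrBlDl.
  by move/key => h; rewrite (le_trans h) // lerDr le_max lexx.
Qed.

Lemma gb_zero {R : realType} (d x : R) : 0 < d -> 2 * d <= x -> 2 * d <= 1 - x -> gb d x = 0.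
Proof.
move=> d0 h1 h2; rewrite /gb.
have d20 : 0 < 2 * d by rewrite mulr_gt0.
have key : forall y, 2 * d <= y -> Num.max 0 (1 - y / (2 * d)) = 0.
  move=> y hy; apply/eqP; rewrite eq_le ge_max lexx /= le_max lexx /= andbT.
  by rewrite subr_le0 ler_pdivlMr // mul1r.
by rewrite !key // addr0.
Qed.

Lemma boundary_small {R : realType} (phi : R -> R) :
  (@lebesgue_measure R).-integrable `[0, 1] (EFin \o phi) ->
  forall e : R, 0 < e -> exists2 d : R, 0 < d &
    \int[@lebesgue_measure R]_(x in `[0, 1]) (gb d x * phi x) <= e.
Proof.
move=> iphi e e0.
set D := `[0, 1]%classic : set R.
have mD : measurable D by exact: measurable_itv.
have mphi : measurable_fun D phi by apply/measurable_EFinP; exact: measurable_int iphi.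
pose fn := fun m : nat => fun x => ((gb (m.+1%:R^-1) x) * phi x)%:E.
pose G := fun x => (2%:E * (abse \o (EFin \o phi)) x)%E.
have mfn : forall m, measurable_fun D (fn m).
  move=> m; apply/measurable_EFinP; apply: measurable_funM => //.
  apply: measurable_funS (continuous_measurable_fun (gb_cont _)) => //.
have mf0 : measurable_fun D (cst (0 : \bar R)) by [].
have ig : (@lebesgue_measure R).-integrable D G.
  apply: integrableZl => //; exact: integrable_abse.
have fg : {ae (@lebesgue_measure R), forall x n, D x -> (`|fn n x| <= G x)%E}.
  apply: aeW => x n Dx; rewrite /fn /G /=.
  rewrite -EFinM lee_fin normrM ler_wpM2r // ger0_norm ?gb_ge0 //.
  apply: gb_le2; last by move: Dx; rewrite /D /= in_itv.
  by rewrite invr_gt0.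
have ff : {ae (@lebesgue_measure R), forall x, D x -> fn ^~ x @ \oo --> (cst 0 x : \bar R)}.
  have : (@lebesgue_measure R).-negligible ([set 0%R] `|` [set 1%R]).
    apply: negligibleU; apply/negligibleP => //.
    - exact: lebesgue_measure_set1.
    - exact: lebesgue_measure_set1.
  case=> A [mA A0 sA]; exists A; split => //; apply: subset_trans sA.
    move=> x /=; apply: contra_notP => /not_orP [x0 x1] Dx.
    have := Dx; rewrite /D /= in_itv /= => /andP [x0' x1'].
    have xp : 0 < x by rewrite lt_neqAle eq_sym; apply/andP; split => //; apply/eqP.
    have xq : 0 < 1 - x by rewrite subr_gt0 lt_neqAle; apply/andP; split => //; apply/eqP.
    have m0 : 0 < Num.min x (1 - x) / 2 by rewrite divr_gt0 // lt_min xp.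
    apply: cvg_near_cst.
    have [N _ HN] := near_infty_natSinv_lt (PosNum m0).
    exists N => // m /= Nm; have := HN m Nm; rewrite /= => hm.
    have hmin1 : Num.min x (1 - x) <= x by rewrite ge_min lexx.
    have hmin2 : Num.min x (1 - x) <= 1 - x by rewrite ge_min lexx orbT.
    rewrite /fn gb_zero ?mul0r //.
    - by apply: le_trans hmin1; rewrite mulrC -ler_pdivlMr //; exact: ltW hm.
    - by apply: le_trans hmin2; rewrite mulrC -ler_pdivlMr //; exact: ltW hm.
have [_ _ H] := @dominated_convergence _ _ _ (@lebesgue_measure R) D mD fn (cst 0) G mfn mf0 ff ig fg.
rewrite integral0 in H.
have H2 : (fun m => fine (\int[@lebesgue_measure R]_(x in D) fn m x)%E) @ \oo --> (0 : R).
  exact: fine_cvg H.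
move: H2; move/cvgrPdist_le => /(_ e e0) [N _ HN].
exists N.+1%:R^-1; first by rewrite invr_gt0.
have := HN N (leqnn N); rewrite /= sub0r normrN.
by move/(le_trans (ler_norm _)).
Qed.
Lemma leb_Iint {R : realType} (c l : nat -> R) k : 0 < l k ->
  (@lebesgue_measure R) (Iint c l k) = (l k)%:E.
Proof.
move=> l0; rewrite /Iint lebesgue_measure_itv /= lte_fin.
have -> : c k - l k / 2 < c k + l k / 2 by lra.
rewrite -EFinD; congr (_%:E); lra.
Qed.

Lemma ek_bound {R : realType} (c l : nat -> R) (f : R -> R) (k : nat) (M eps eta d : R) :
  0 < c k < 1 -> 0 < l k -> {within `[0, 1], continuous f} ->
  (forall x, `[0, 1]%classic x -> `|f x| <= M) -> 0 < eps ->
  (forall x y, `[0, 1]%classic x -> `[0, 1]%classic y -> `|x - y| < eta -> `|f x - f y| < eps) ->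
  l k / 2 < eta -> l k / 2 < d -> 0 < d ->
  `|(l k)^-1 * \int[@lebesgue_measure R]_(x in Iint c l k `&` `[0, 1]) f x - f (c k)|
    <= eps + 2 * M * gb d (c k).
Proof.
move=> /andP[c0 c1] l0 hf hM e0 hU leta ld d0.
set J := Iint c l k `&` `[0, 1]%classic.
set K := `[0, 1]%classic : set R.
have mK : measurable K by exact: measurable_itv.
have mJ : measurable J by apply: measurableI; exact: measurable_itv.
have JK : J `<=` K by move=> x [].
have iK : (@lebesgue_measure R).-integrable K (EFin \o f).
  have h := continuous_compact_integrable (@segment_compact R 0 1) hf; exact: h.
have iJ : (@lebesgue_measure R).-integrable J (EFin \o f).
  by apply: (integrableS _ _ _ iK) => //.
have iJc : forall r : R, (@lebesgue_measure R).-integrable J (EFin \o cst r).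
  move=> r; have hc : {within `[0, 1], continuous (@cst R R r)}.
    by apply: continuous_subspaceT => x; exact: cvg_cst.
  have h := continuous_compact_integrable (@segment_compact R 0 1) hc.
  by apply: (integrableS _ _ _ h) => //.
have Kc : K (c k) by rewrite /K /= in_itv /= !ltW.
have hMc := hM _ Kc.
have M0 : 0 <= M by exact: le_trans (normr_ge0 _) hMc.
have hJ : ((@lebesgue_measure R) J <= (l k)%:E)%E.
  rewrite -(leb_Iint c l k l0); apply: le_measure; rewrite ?inE //; [exact: measurable_itv | by move=> x []].
have fJ : (@lebesgue_measure R) J \is a fin_num.
  by rewrite ge0_fin_numE ?measure_ge0 // (le_lt_trans hJ) // ltry.
set m := fine ((@lebesgue_measure R) J).
have m0 : 0 <= m by rewrite /m fine_ge0 // measure_ge0.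
have ml : m <= l k by rewrite -lee_fin /m fineK.
have close : forall x, J x -> `|f (c k) - f x| < eps.
  move=> x [Ix Kx]; apply: hU => //.
  move: Ix; rewrite /Iint /= in_itv /= => /andP [h1 h2].
  rewrite ltr_norml; apply/andP; split; lra.
set I := \int[@lebesgue_measure R]_(x in J) f x.
have Iup : I <= (f (c k) + eps) * m.
  rewrite /I -Rintegral_cst //; apply: le_Rintegral; [by [] | exact: iJ | exact: (iJc _) | move=> x Jx].
  have := close x Jx; rewrite ltr_norml => /andP [h1 h2]; lra.
have Ilo : (f (c k) - eps) * m <= I.
  rewrite /I -Rintegral_cst //; apply: le_Rintegral; [by [] | exact: (iJc _) | exact: iJ | move=> x Jx].
  have := close x Jx; rewrite ltr_norml => /andP [h1 h2]; lra.
have li0 : 0 < (l k)^-1 by rewrite invr_gt0.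
have uup : (l k)^-1 * I <= (f (c k) + eps) * (m / l k).
  rewrite (_ : (f (c k) + eps) * (m / l k) = (l k)^-1 * ((f (c k) + eps) * m)); last by ring.
  by rewrite ler_pM2l.
have ulo : (f (c k) - eps) * (m / l k) <= (l k)^-1 * I.
  rewrite (_ : (f (c k) - eps) * (m / l k) = (l k)^-1 * ((f (c k) - eps) * m)); last by ring.
  by rewrite ler_pM2l.
have r0 : 0 <= m / l k by rewrite divr_ge0 // ltW.
have r1 : m / l k <= 1 by rewrite ler_pdivrMr // mul1r.
have g0 := gb_ge0 d (c k).
have Mc : - M <= f (c k) <= M by rewrite -ler_norml.
case/andP: Mc => Mc1 Mc2.
move: uup ulo r0 r1; set u := (l k)^-1 * I; set r := m / l k => uup ulo r0 r1.
have [hA|hB] := boolP ((0 <= c k - l k / 2) && (c k + l k / 2 <= 1)).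
  have JI : J = Iint c l k.
    apply: setIidl => x; rewrite /Iint /= !in_itv /= => /andP [h1 h2].
    case/andP: hA => hA1 hA2; apply/andP; split; lra.
  have mE : m = l k by rewrite /m JI leb_Iint.
  have rE : r = 1 by rewrite /r mE divff // gt_eqF.
  rewrite rE !mulr1 in uup ulo.
  have : 0 <= 2 * M * gb d (c k) by rewrite mulr_ge0 // mulr_ge0.
  rewrite ler_norml; move=> h; apply/andP; split; lra.
have hg : 2^-1 <= gb d (c k).
  apply: gb_half => //.
  move: hB; rewrite negb_and -!ltNge => /orP [h|h]; [left|right]; lra.
have hMg : M <= 2 * M * gb d (c k).
  have : 0 <= M * (2 * gb d (c k) - 1).
    by apply: mulr_ge0 => //; rewrite subr_ge0 -(@ler_pM2r _ (2^-1)) ?invr_gt0 // mul1r mulrAC divff // mul1r.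
  move=> h; rewrite -subr_ge0; apply: (le_trans h); rewrite le_eqVlt; apply/orP; left; apply/eqP.
  ring.
have p1 : eps * r <= eps by rewrite ler_piMr // ltW.
have p2 : f (c k) * r - f (c k) <= M by nra.
have p3 : - M <= f (c k) * r - f (c k) by nra.
rewrite ler_norml; apply/andP; split; nra.
Qed.


Lemma bound01 {R : realType} (f : R -> R) : {within `[0, 1], continuous f} ->
  exists M : R, forall x, `[0, 1]%classic x -> `|f x| <= M.
Proof.
move=> hf.
have [cM _ hmax] := EVT_max ler01 hf.
have [cm _ hmin] := EVT_min ler01 hf.
exists (`|f cM| + `|f cm|) => x Kx.
have h1 := hmax x Kx; have h2 := hmin x Kx.
have a1 := ler_norm (f cM); have a2 := ler_norm (- f cm); rewrite normrN in a2.
have a3 := normr_ge0 (f cM); have a4 := normr_ge0 (f cm).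
rewrite ler_norml; apply/andP; split; lra.
Qed.

Theorem lemma4p5 (R : realType) (c l : nat -> R) (phi f : R -> R)
  (hc : forall k, 0 < c k < 1)
  (hl0 : forall k, 0 < l k)
  (hldec : forall i j, (i <= j)%N -> l j <= l i)
  (hlcvg : l @ \oo --> 0)
  (* (A1) *)
  (hphi_int : (@lebesgue_measure R).-integrable `[0, 1] (EFin \o phi))
  (hphi_pos : {ae @lebesgue_measure R, forall x, `[0, 1]%classic x -> 0 < phi x})
  (hA1 : forall g : R -> R, {within `[0, 1], continuous g} ->
     (fun n : nat => (n%:R)^-1 * \sum_(n <= k < n.*2) g (c k)) @ \oo -->
       \int[@lebesgue_measure R]_(x in `[0, 1]) (g x * phi x))
  (* (A3) *)
  (hA3 : exists q : nat -> nat, (q @ \oo --> \oo)%classic /\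
     forall eps : R, 0 < eps -> \forall n \near \oo,
       forall i j, Ablocks n (q n) i -> Ablocks n (q n) j -> i <> j ->
         l i + l j < eps * (2 * `|c i - c j|))
  (hf : {within `[0, 1], continuous f}) :
  (fun n : nat => mu_A c l f n (Vn c l n)
      - \int[@lebesgue_measure R]_(x in `[0, 1]) (f x * phi x)) @ \oo --> 0.
Proof.
set L := \int[@lebesgue_measure R]_(x in `[0, 1]) (f x * phi x).
have hS := hA1 f hf.
suff hE : (fun n : nat => mu_A c l f n (Vn c l n)
    - n%:R^-1 * \sum_(n <= k < n.*2) f (c k)) @ \oo --> 0.
  apply/subr_cvg0; apply: (cvg_sub0 _ hS); exact: hE.
apply/cvgrPdist_le => e e0.
have [M hM] := bound01 f hf.
have M0 : 0 <= M.
  have K0 : `[0, 1]%classic (0 : R) by rewrite /= in_itv /= lexx ler01.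
  exact: le_trans (normr_ge0 _) (hM _ K0).
have den0 : 0 < 1 + 4 * M by rewrite ltr_pwDl // mulr_ge0.
set eps := e / (1 + 4 * M).
have eps0 : 0 < eps by rewrite divr_gt0.
have [eta eta0 hU] := @unif_cont01 R f hf eps eps0.
have [d d0 hd] := @boundary_small R phi hphi_int eps eps0.
have hg := hA1 (gb d) (continuous_subspaceT (gb_cont d)).
move/cvgrPdist_le: hg => /(_ eps eps0) hg.
have m0 : 0 < Num.min eta d by rewrite lt_min eta0 d0.
move/cvgrPdist_lt: hlcvg => /(_ _ m0) hl.
near=> n.
have n0 : (0 < n)%N by near: n; exists 1%N.
have hln : `|0 - l n| < Num.min eta d by near: n.
have hgn : `|\int[@lebesgue_measure R]_(x in `[0, 1]) (gb d x * phi x) -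
   n%:R^-1 * \sum_(n <= k < n.*2) gb d (c k)| <= eps by near: n.
rewrite sub0r normrN in hln.
have ln0 := hl0 n.
have hln' : l n < Num.min eta d by rewrite -(ger0_norm (ltW ln0)).
have lneta : l n < eta by move: hln'; rewrite lt_min => /andP[].
have lnd : l n < d by move: hln'; rewrite lt_min => /andP[].
rewrite sub0r normrN /mu_A -mulrBr -sumrB normrM.
have H1 : `|\sum_(n <= k < n.*2) (mu_k c l f k (Vn c l n) - f (c k))| <=
    \sum_(n <= k < n.*2) (eps + 2 * M * gb d (c k)).
  apply: (le_trans (ler_norm_sum _ _ _)); apply: ler_sum_nat => k /andP[nk kn].
  rewrite /mu_k (@setIidr _ (Vn c l n) (Iint c l k)); last by move=> x Ix; exists k => //; rewrite /Ablock /= nk kn.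
  have lk := hldec n k nk.
  have lk0 := hl0 k.
  apply: (@ek_bound R c l f k M eps eta d) => //; lra.
have H2 : \sum_(n <= k < n.*2) (eps + 2 * M * gb d (c k)) =
    eps * n%:R + 2 * M * \sum_(n <= k < n.*2) gb d (c k).
  by rewrite big_split /= sumr_const_nat -mulr_sumr -addnn addnK mulr_natr.
have nR0 : 0 < n%:R :> R by rewrite ltr0n.
rewrite ger0_norm ?invr_ge0 ?ler0n //.
apply: le_trans (ler_wpM2l _ H1) _; first by rewrite invr_ge0 ler0n.
rewrite H2 mulrDr mulrCA mulVf ?gt_eqF // mulr1 mulrCA.
set A := n%:R^-1 * \sum_(n <= k < n.*2) gb d (c k).
have hA : A <= 2 * eps.
  move: hgn; rewrite distrC ler_distl => /andP [_ h]; rewrite /A; lra.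
have : 2 * M * A <= 2 * M * (2 * eps) by apply: ler_wpM2l => //; rewrite mulr_ge0.
have -> : e = eps * (1 + 4 * M) by rewrite /eps mulfVK // gt_eqF.
move=> h; lra.
Unshelve. all: end_near.
Qed.
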